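(* Let $\mathfrak g$ be a finite-dimensional simple Lie algebra (take $\epsilon=1$) or an affine Kac–Moody algebra (take $\epsilon=0$), with Chevalley generators $\{e_i,f_i,h_i\}_{i=\epsilon}^{r}$, simple roots $\alpha_i$, invariant symmetric bilinear form $(\cdot|\cdot)$, Weyl vector $\rho$ (with $(\rho|\alpha_i)=\tfrac12(\alpha_i|\alpha_i)$) and positive root cone $Q_+=\bigoplus_i\mathbb{Z}_{\ge0}\alpha_i$. Let $V_\lambda$ be the Verma module with highest weight vector $|\lambda\rangle$, and assume $\lambda$ is such that $$v(\gamma):=(\lambda+\rho\,|\,\gamma)-\tfrac12(\gamma|\gamma)\neq0\quad\text{for all }\gamma\in Q_+\setminus\{0\}.$$ For a word $(i_1,\dots,i_k)$ in $[\epsilon,r]$, associate the lattice path $p$ in $Q_+$ starting at $0$ whose successive steps are $\alpha_{i_k},\alpha_{i_{k-1}},\dots,\alpha_{i_1}$, ending at $\beta=\sum_j\alpha_{i_j}$, and put $|p\rangle=f_{i_1}f_{i_2}\cdots f_{i_k}|\lambda\rangle$ and $$w(p)=\prod_{\gamma}\frac{1}{v(\gamma)},$$ the product being over the vertices $\gamma\neq0$ of $p$ (i.e. the $k$ points reached after each step, including the endpoint). Then for any parameters $\mu_\epsilon,\dots,\mu_r$, the element of the completion of $V_\lambda$ $$v_{\lambda,\mu}=\sum_{\beta\in Q_+}\prod_i\mu_i^{\beta_i}\sum_{p:0\to\beta}w(p)\,|p\rangle,$$ where $\beta=\sum_i\beta_i\alpha_i$ and the inner sum is over all such paths from $0$ to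 $\beta$, satisfies $e_i\,v_{\lambda,\mu}=\mu_i\,v_{\lambda,\mu}$ for all $i\in[\epsilon,r]$, i.e. it is the Whittaker vector normalized so that the coefficient of $|\lambda\rangle$ is $1$.
   Context: A Whittaker vector with parameters $\mu_i$ in (the completion of) $V_\lambda$ is a vector $v$ with $e_iv=\mu_iv$ for all $i$; it is unique up to normalization. The vectors $|p\rangle$ are not linearly independent; the formula is an expansion on these words. *)

(* Defs.v *)
From HB Require Import structures.
From mathcomp Require Import all_boot all_order all_algebra.
Set Implicit Arguments. Unset Strict Implicit. Unset Printing Implicit Defensive.
Import Order.TTheory GRing.Theory Num.Theory.
Local Open Scope ring_scope.

(* Elements of Q_+ are coordinate vectors beta = (beta_i)_i : I -> nat,
   standing for sum_i beta_i alpha_i. *)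

(* content of a word: the element of Q_+ reached by the lattice path of the word *)
Definition content (I : finType) (s : seq I) : {ffun I -> nat} :=
  [ffun i => count_mem i s].

Definition addroot (I : finType) (beta : {ffun I -> nat}) (i : I) : {ffun I -> nat} :=
  [ffun j => (beta j + (j == i))%N].

Definition rootvec (K : fieldType) (H : lmodType K) (I : finType)
  (alpha : I -> H) (beta : {ffun I -> nat}) : H :=
  \sum_i (beta i)%:R *: alpha i.

Definition vfun (K : fieldType) (H : lmodType K) (form : H -> H -> K)
  (I : finType) (alpha : I -> H) (lambda rho : H) (gamma : {ffun I -> nat}) : K :=
  form (lambda + rho) (rootvec alpha gamma)
  - form (rootvec alpha gamma) (rootvec alpha gamma) / 2%:R.

(* w(p) for the path p of the word s = (i_1,...,i_k): its vertices != 0 are the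
   contents of the nonempty suffixes (i_{m+1},...,i_k), m = 0..k-1. *)
Definition wpath (K : fieldType) (H : lmodType K) (form : H -> H -> K)
  (I : finType) (alpha : I -> H) (lambda rho : H) (s : seq I) : K :=
  \prod_(m < size s) (vfun form alpha lambda rho (content (drop m s)))^-1.

Definition ket (K : fieldType) (V : lmodType K) (I : finType)
  (f : I -> V -> V) (vl : V) (s : seq I) : V :=
  foldr (fun i x => f i x) vl s.

(* the degree-beta component of v_{lambda,mu}:
   prod_i mu_i^{beta_i} sum_{p : 0 -> beta} w(p) |p>  *)
Definition whit_comp (K : fieldType) (H : lmodType K) (form : H -> H -> K)
  (I : finType) (alpha : I -> H) (lambda rho : H)
  (V : lmodType K) (f : I -> V -> V) (vl : V) (mu : I -> K)
  (beta : {ffun I -> nat}) : V :=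
  (\prod_i mu i ^+ beta i) *:
  \sum_(t : (\sum_i beta i)%N.-tuple I | content t == beta)
     wpath form alpha lambda rho t *: ket f vl t.

(* Main.v *)
Require Import Defs.
From HB Require Import structures.
From mathcomp Require Import all_boot all_order all_algebra.
From mathcomp Require Import ring zify.
Import Order.TTheory GRing.Theory Num.Theory.
Set Implicit Arguments. Unset Strict Implicit. Unset Printing Implicit Defensive.
Local Open Scope ring_scope.

Lemma sum_tuple_cons (V : nmodType) (I : finType) n (P : pred (seq I)) (G : seq I -> V) :
 \sum_(t : n.+1.-tuple I | P t) G t = \sum_(j : I) \sum_(t : n.-tuple I | P (j :: t)) G (j :: t).
Proof.
rewrite pair_big_dep (reindex (fun t : n.+1.-tuple I => (thead t, behead_tuple t))) /=.
  by apply: eq_big => t; rewrite [t in LHS]tuple_eta.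
exists (fun p => cons_tuple p.1 p.2) => [t _|[j t] _] /=.
  by rewrite [RHS]tuple_eta; apply: val_inj.
by rewrite theadE; congr pair; apply: val_inj.
Qed.

Definition subroot (I : finType) (g : {ffun I -> nat}) (j : I) : {ffun I -> nat} :=
  [ffun k => (g k - (k == j))%N].

Lemma addroot_eq (I : finType) (x g : {ffun I -> nat}) j :
  (addroot x j == g) = (0 < g j)%N && (x == subroot g j).
Proof.
apply/eqP/andP => [<-|[Hj /eqP ->]].
  rewrite !ffunE eqxx addn1; split => //; apply/eqP/ffunP => k; rewrite !ffunE.
  by case: (k == j) => /=; lia.
apply/ffunP => k; rewrite !ffunE; case: eqP => [->|_] /=; lia.
Qed.

Lemma addroot_sub (I : finType) (g : {ffun I -> nat}) j :
  (0 < g j)%N -> addroot (subroot g j) j = g.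
Proof. by move=> H; apply/eqP; rewrite addroot_eq H eqxx. Qed.

Lemma sub_addroot (I : finType) (b : {ffun I -> nat}) i : subroot (addroot b i) i = b.
Proof. by apply/ffunP => k; rewrite !ffunE; case: (k == i) => /=; lia. Qed.

Lemma sub_add_comm (I : finType) (b : {ffun I -> nat}) i j :
  (0 < b j)%N -> subroot (addroot b i) j = addroot (subroot b j) i.
Proof.
move=> H; apply/ffunP => k; rewrite !ffunE.
case: (eqVneq k j) => [->|_]; case: (k == i) => /=; lia.
Qed.

Lemma content_cons (I : finType) j (s : seq I) : content (j :: s) = addroot (content s) j.
Proof. by apply/ffunP => k; rewrite !ffunE /= addnC eq_sym. Qed.

Lemma content_nil (I : finType) : content ([::] : seq I) = 0.
Proof. by apply/ffunP => k; rewrite !ffunE. Qed.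

Section Main.
Variables (K : numClosedFieldType) (H : lmodType K) (form : H -> H -> K).
Variable form_linl : forall (a : K) (x y z : H), form (a *: x + y) z = a * form x z + form y z.
Variable form_sym : forall x y : H, form x y = form y x.
Variables (I : finType) (alpha : I -> H) (rho : H).
Variable hrho : forall i, form rho (alpha i) = form (alpha i) (alpha i) / 2%:R.
Variable lambda : H.
Variable hgen : forall gamma : {ffun I -> nat},
      gamma != 0 -> vfun form alpha lambda rho gamma != 0.
Variables (V : lmodType K) (e f h : I -> {linear V -> V}) (vl : V).
Variable hef : forall i j x, e i (f j x) - f j (e i x) = (i == j)%:R *: h i x.
Variable hhf : forall i j x, h i (f j x) - f j (h i x) = - form (alpha i) (alpha j) *: f j x.
Variable hevl : forall i, e i vl = 0.
Variable hhvl : forall i, h i vl = form lambda (alpha i) *: vl.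

Lemma form_addl x y z : form (x + y) z = form x z + form y z.
Proof. by have := form_linl 1 x y z; rewrite scale1r mul1r. Qed.

Lemma form_addr x y z : form x (y + z) = form x y + form x z.
Proof. by rewrite form_sym form_addl !(form_sym x). Qed.

Lemma form0l z : form 0 z = 0.
Proof.
have E := form_addl 0 0 z; rewrite addr0 in E.
by apply: (@addrI _ (form 0 z)); rewrite -E addr0.
Qed.

Lemma rv_add b i : rootvec alpha (addroot b i) = rootvec alpha b + alpha i.
Proof.
rewrite /rootvec; under eq_bigr do rewrite ffunE natrD scalerDl.
rewrite big_split /=; congr (_ + _).
rewrite (bigD1 i) //= eqxx scale1r big1 ?addr0 // => k /negbTE ->.
by rewrite scale0r.
Qed.

Lemma rv0 : rootvec alpha 0 = 0.
Proof. by rewrite /rootvec big1 // => k _; rewrite ffunE scale0r. Qed.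

Local Notation v := (vfun form alpha lambda rho).

Definition cf b i := form lambda (alpha i) - form (rootvec alpha b) (alpha i).

Lemma v0 : v 0 = 0.
Proof. by rewrite /vfun rv0 form_sym form0l form0l mul0r subr0. Qed.

Lemma v_add b i : v (addroot b i) = v b + cf b i.
Proof.
rewrite /vfun /cf rv_add !form_addl !form_addr hrho (form_sym (alpha i)).
have H2 : (2%:R : K) != 0 by rewrite pnatr_eq0.
by field.
Qed.

Definition kt (s : seq I) : V := ket (fun j => f j) vl s.

Lemma ket_h i t : h i (kt t) = cf (content t) i *: kt t.
Proof.
elim: t => [|j t IH]; first by rewrite /kt /= hhvl content_nil /cf rv0 form0l subr0.
have E := hhf i j (kt t); move/eqP: E; rewrite subr_eq => /eqP.
rewrite /kt /= -/(kt t) => ->; rewrite IH linearZ -scalerDl; congr (_ *: _).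
rewrite /cf content_cons rv_add form_addl (form_sym (alpha j)); ring.
Qed.

Lemma wpath_cons j s :
  wpath form alpha lambda rho (j :: s) = (v (content (j :: s)))^-1 * wpath form alpha lambda rho s.
Proof.
by rewrite /wpath /= big_ord_recl.
Qed.

Definition W n (b : {ffun I -> nat}) : V :=
  \sum_(t : n.-tuple I | content t == b) wpath form alpha lambda rho t *: kt t.

Lemma W_h n b i : h i (W n b) = cf b i *: W n b.
Proof.
rewrite /W linear_sum scaler_sumr; apply: eq_bigr => t /eqP Ht.
by rewrite linearZ ket_h Ht scalerA mulrC -scalerA.
Qed.

Lemma W0 b : W 0 b = if b == 0 then vl else 0.
Proof.
rewrite /W big_mkcond /= (eq_bigr (fun _ => if b == 0 then vl else 0)).
  by rewrite sumr_const card_tuple expn0 mulr1n.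
move=> t _; rewrite (tuple0 t) /= content_nil eq_sym.
by case: ifP => // _; rewrite /wpath big_ord0 scale1r.
Qed.

Lemma Wrec n g : W n.+1 g =
  (v g)^-1 *: \sum_j (if (0 < g j)%N then f j (W n (subroot g j)) else 0).
Proof.
rewrite /W (@sum_tuple_cons _ _ n (fun s => content s == g)
  (fun s => wpath form alpha lambda rho s *: kt s)) scaler_sumr.
apply: eq_bigr => j _; case: ifP => Hj; last first.
  by rewrite big_pred0 ?scaler0 // => t; rewrite content_cons addroot_eq Hj.
rewrite linear_sum scaler_sumr; apply: eq_big => [t|t Ht].
  by rewrite content_cons addroot_eq Hj.
rewrite wpath_cons (eqP Ht) linearZ scalerA.
by [].
Qed.

Lemma e_zero n (b : {ffun I -> nat}) i : b i = 0%N -> e i (W n b) = 0.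
Proof.
elim: n b => [|n IH] b Hb.
  by rewrite W0; case: ifP; rewrite ?hevl ?linear0.
rewrite Wrec linearZ /= linear_sum big1 ?scaler0 // => j _.
case: ifP => Hj; last by rewrite linear0.
have Hji : i != j by apply/eqP => E; rewrite -E Hb in Hj.
have E := hef i j (W n (subroot b j)); move: E.
rewrite (_ : (i == j) = false); last exact: negbTE.
rewrite scale0r => /eqP; rewrite subr_eq0 => /eqP ->.
rewrite IH ?linear0 // ffunE Hb.
by rewrite (_ : (i == j) = false) //; exact: negbTE.
Qed.

Lemma e_step n (b : {ffun I -> nat}) i :
  e i (W n.+1 (addroot b i)) = (v (addroot b i))^-1 *:
   (\sum_j (if (0 < addroot b i j)%N
           then f j (e i (W n (subroot (addroot b i) j))) else 0)
    + cf b i *: W n b).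
Proof.
rewrite Wrec linearZ /= linear_sum; congr (_ *: _).
rewrite -W_h.
rewrite (eq_bigr (fun j => (if (0 < addroot b i j)%N
           then f j (e i (W n (subroot (addroot b i) j))) else 0)
   + (if j == i then h i (W n (subroot (addroot b i) j)) else 0))).
  by rewrite big_split /=; congr (_ + _); rewrite -big_mkcond big_pred1_eq sub_addroot.
move=> j _; case: ifP => Hj.
  have := hef i j (W n (subroot (addroot b i) j)); move/eqP.
  rewrite subr_eq => /eqP ->.
  case: (eqVneq j i) => [->|Nji].
    by rewrite /= scale1r addrC.
  by rewrite /= scale0r add0r addr0.
rewrite linear0; case: eqVneq => [E|_]; last by rewrite addr0.
by rewrite E ffunE eqxx addn1 in Hj.
Qed.

Lemma e_main n (b : {ffun I -> nat}) i : e i (W n.+1 (addroot b i)) = W n b.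
Proof.
elim: n b => [|n IH] b; rewrite e_step.
  rewrite big1 => [|j _]; last first.
    by case: ifP; rewrite // W0; case: ifP; rewrite ?hevl ?linear0.
  rewrite add0r scalerA W0; case: eqP => [->|_]; last by rewrite scaler0.
  rewrite -[cf 0 i]add0r -v0 -v_add mulVf ?scale1r //.
  apply: hgen; apply/eqP => /ffunP/(_ i); rewrite !ffunE eqxx addn1.
  by [].
have Hsum : \sum_j (if (0 < addroot b i j)%N
           then f j (e i (W n.+1 (subroot (addroot b i) j))) else 0)
   = v b *: W n.+1 b.
  transitivity (\sum_j (if (0 < b j)%N then f j (W n (subroot b j)) else 0)).
    apply: eq_bigr => j _; case: (posnP (b j)) => [Hb0|Hbp].
      case: ifP => // Hg.
      rewrite ffunE Hb0 in Hg; case: eqVneq Hg => // E _; subst j.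
      by rewrite sub_addroot e_zero ?linear0.
    rewrite ffunE ltn_addr // sub_add_comm // IH.
    by [].
  rewrite Wrec scalerA; case: (eqVneq b 0) => [->|Nb].
    rewrite v0 mul0r scale0r big1 // => j _.
    by rewrite ffunE.
  by rewrite mulfV ?scale1r //; exact: hgen.
rewrite Hsum -scalerDl -v_add scalerA mulVf ?scale1r //.
apply: hgen; apply/eqP => /ffunP/(_ i); rewrite !ffunE eqxx addn1.
by [].
Qed.

End Main.

Lemma sum_addroot (I : finType) (b : {ffun I -> nat}) i :
  (\sum_k addroot b i k = (\sum_k b k).+1)%N.
Proof.
rewrite (eq_bigr (fun k => b k + (k == i))%N) => [|k _]; last by rewrite ffunE.
have E : (\sum_k ((k == i) : nat) = 1)%N.
  by rewrite (bigD1 i) //= eqxx big1 // => k /negbTE ->.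
by rewrite big_split /= E addn1.
Qed.

Lemma prod_addroot (K : comNzRingType) (I : finType) (mu : I -> K) (b : {ffun I -> nat}) i :
  \prod_k mu k ^+ addroot b i k = mu i * \prod_k mu k ^+ b k.
Proof.
under eq_bigr do rewrite ffunE exprD.
rewrite big_split /= mulrC; congr (_ * _).
rewrite (bigD1 i) //= eqxx expr1 big1 ?mulr1 // => k /negbTE ->.
by rewrite expr0.
Qed.
Theorem theorem4p1
  (K : numClosedFieldType)
  (* h^* with the invariant symmetric bilinear form ( . | . ) *)
  (H : lmodType K) (form : H -> H -> K)
  (form_linl : forall (a : K) (x y z : H),
      form (a *: x + y) z = a * form x z + form y z)
  (form_sym : forall x y : H, form x y = form y x)
  (* index set [epsilon, r] and simple roots *)
  (I : finType) (alpha : I -> H)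
  (* Weyl vector *)
  (rho : H) (hrho : forall i, form rho (alpha i) = form (alpha i) (alpha i) / 2%:R)
  (* highest weight, generic *)
  (lambda : H)
  (hgen : forall gamma : {ffun I -> nat},
      gamma != 0 -> vfun form alpha lambda rho gamma != 0)
  (* module with Chevalley-type operators and highest weight vector |lambda> *)
  (V : lmodType K) (e f h : I -> {linear V -> V}) (vl : V)
  (hef : forall i j x, e i (f j x) - f j (e i x) = (i == j)%:R *: h i x)
  (hhe : forall i j x, h i (e j x) - e j (h i x) = form (alpha i) (alpha j) *: e j x)
  (hhf : forall i j x, h i (f j x) - f j (h i x) = - form (alpha i) (alpha j) *: f j x)
  (hhh : forall i j x, h i (h j x) = h j (h i x))
  (hevl : forall i, e i vl = 0)
  (hhvl : forall i, h i vl = form lambda (alpha i) *: vl)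
  (* parameters *)
  (mu : I -> K) :
  (* e_i v = mu_i v in the completion prod_{beta in Q_+} V_{lambda - beta},
     written degree by degree *)
  (forall (i : I) (beta : {ffun I -> nat}),
      e i (whit_comp form alpha lambda rho (fun j => f j) vl mu (addroot beta i))
      = mu i *: whit_comp form alpha lambda rho (fun j => f j) vl mu beta)
  /\
  (forall (i : I) (beta : {ffun I -> nat}), beta i = 0%N ->
      e i (whit_comp form alpha lambda rho (fun j => f j) vl mu beta) = 0).
Proof.
split.
  move=> i b.
  change (e i ((\prod_k mu k ^+ addroot b i k) *:
            W form alpha rho lambda f vl (\sum_k addroot b i k) (addroot b i))
          = mu i *: ((\prod_k mu k ^+ b k) *: W form alpha rho lambda f vl (\sum_k b k) b)).
  rewrite sum_addroot prod_addroot linearZ /= (e_main form_linl form_sym hrho hgen hef hhf hevl hhvl).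
  by rewrite scalerA.
move=> i b Hb.
change (e i ((\prod_k mu k ^+ b k) *: W form alpha rho lambda f vl (\sum_k b k) b) = 0).
by rewrite linearZ /= (e_zero form alpha rho lambda hef hevl) ?scaler0.
Qed.
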